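(* Let $d \ge 2$. For $R \subseteq \{0,1,\dots,d-1\}$ let $\mathrm{err}(R) = \min_{m \in \mathcal{M}_d(R)} \| m - \textsc{max} \|_\infty$, where $\|\cdot\|_\infty$ is the sup norm of a function over the unit cube $[0,1]^d$ and $\textsc{max}(x)=\max_i x_i$. Then $$\mathrm{err}(\{d-1\}) = \frac{1}{2d-1},\qquad \mathrm{err}(\{0, d-1\}) = \frac{1}{2d},\qquad \mathrm{err}(\{0,1,2,\dots,d-1\}) \le \frac{1}{2^d}.$$
   Context: For $x\in\mathbb{R}^d$ and nonempty $A\subseteq\{1,\dots,d\}$, the subpool max is $s(x;A)=\max\{x_j:j\in A\}$. $C(k,r,d)$ denotes the $k$-th $r$-element subset of $\{1,\dots,d\}$ in lexicographic order, $k=1,\dots,\binom{d}{r}$. For $R\subseteq\{0,1,\dots,d-1\}$, $\mathcal{M}_d(R)$ is the set of functions $$x \mapsto \beta_0 + \sum_{r\in R\setminus\{0\}} \sum_{j=1}^{\binom{d}{r}} \beta_r^j\, s(x; C(j,r,d)), \qquad \beta_0,\beta_r^j\in\mathbb{R},$$ where the intercept $\beta_0$ is included if $0\in R$ and omitted (i.e. $\beta_0=0$) if $0\notin R$. *)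

(* Defs.v *)
From HB Require Import structures.
From mathcomp Require Import all_boot all_order all_algebra.
From mathcomp Require Import all_classical all_reals.
Set Implicit Arguments. Unset Strict Implicit. Unset Printing Implicit Defensive.
Import Order.TTheory GRing.Theory Num.Theory.
Local Open Scope ring_scope.
Local Open Scope classical_set_scope.

Section Defs.
Variable R : realType.
Variable d : nat.

(* subpool max s(x;A) = max_{j in A} x_j  (0 by convention if A is empty;
   only used for nonempty A) *)
Definition smax (x : 'I_d -> R) (A : {set 'I_d}) : R :=
  if [pick j in A] is Some j then \big[Num.max/x j]_(k in A) x k else 0.

Definition maxf (x : 'I_d -> R) : R := smax x [set: 'I_d].

Definition cube : set ('I_d -> R) := [set x | forall i, 0 <= x i <= 1].

(* M_d(Rs): the intercept is present iff 0 \in Rs; for each r \in Rs, r > 0,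
   one coefficient per r-element subset of {1..d} (the lexicographic labelling
   C(j,r,d) of these subsets is just an indexing of the coefficients). *)
Definition inModel (Rs : pred nat) (f : ('I_d -> R) -> R) : Prop :=
  exists (b0 : R) (beta : {set 'I_d} -> R), forall x : 'I_d -> R,
    f x = (if 0%N \in Rs then b0 else 0)
          + \sum_(A : {set 'I_d} | (#|A| \in Rs) && (0 < #|A|)%N) beta A * smax x A.

Definition supErr (f : ('I_d -> R) -> R) : R :=
  sup [set `|f x - maxf x| | x in cube].

Definition err (Rs : pred nat) : R :=
  inf [set supErr f | f in inModel Rs].

End Defs.

(* Main.v *)
Require Import Defs.
From HB Require Import structures.
From mathcomp Require Import all_boot all_order all_algebra.
From mathcomp Require Import all_classical all_reals.
From mathcomp Require Import ring lra.
Import Order.TTheory GRing.Theory Num.Theory.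
Local Open Scope ring_scope.

Section Aux.
Variable R : realType.
Variable d : nat.
Implicit Types (x : 'I_d -> R) (A : {set 'I_d}).

Lemma bigmax_ub (x : 'I_d -> R) (x0 : R) (s : seq 'I_d) j :
  j \in s -> x j <= \big[Num.max/x0]_(k <- s) x k.
Proof.
elim: s => [//|a s IH]; rewrite inE big_cons => /orP[/eqP->|/IH h].
  by rewrite le_max lexx.
by rewrite le_max h orbT.
Qed.

Lemma smax_ub x A j : j \in A -> x j <= smax x A.
Proof.
move=> jA; rewrite /smax; case: pickP => [j0 _|H]; last by move: (H j); rewrite /= jA.
rewrite -big_enum; apply: bigmax_ub; by rewrite mem_enum.
Qed.

Lemma smax_mem x A : A != finset.set0 -> exists2 j, j \in A & smax x A = x j.
Proof.
move=> /set0Pn[j jA]; rewrite /smax; case: pickP => [j0 j0A|H]; last by move: (H j); rewrite /= jA.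
apply: (big_ind (fun v => exists2 j, j \in A & v = x j)).
- by exists j0.
- move=> a b [i1 h1 ->] [i2 h2 ->]; rewrite /Order.max; case: ifP => _; [by exists i2|by exists i1].
- by move=> i iA; exists i.
Qed.

Lemma smax_eq x A j v : j \in A -> v = x j -> (forall k, k \in A -> x k <= v) ->
  smax x A = v.
Proof.
move=> jA -> ub; apply/le_anti/andP; split; last exact: smax_ub.
have [k kA ->] : exists2 k, k \in A & smax x A = x k.
  by apply: smax_mem; apply/set0Pn; exists j.
exact: ub.
Qed.

Arguments smax_eq {x A j v}.

Lemma smax_0 x : smax x finset.set0 = 0.
Proof. by rewrite /smax; case: pickP => [j|//]; rewrite inE. Qed.

Lemma smax_cube x A : cube x -> 0 <= smax x A <= 1.
Proof.
move=> cx; have [->|nA] := eqVneq A finset.set0; first by rewrite smax_0 lexx ler01.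
by have [j _ ->] := smax_mem x A nA; apply: cx.
Qed.


Definition cst (c : R) : 'I_d -> R := fun _ => c.
Definition ei (i : 'I_d) : 'I_d -> R := fun j => if j == i then 1 else 0.

Lemma cube_cst c : 0 <= c <= 1 -> cube (cst c).
Proof. by move=> h i. Qed.

Lemma le01 : 0 <= (0 : R) <= 1.
Proof. by rewrite lexx ler01. Qed.

Lemma cube_ei i : cube (ei i).
Proof. by move=> j; rewrite /ei; case: (j == i); rewrite lexx ler01. Qed.

Lemma smax_cst c A : A != finset.set0 -> smax (cst c) A = c.
Proof.
move=> /set0Pn[j jA]; apply: (smax_eq jA) => //.
Qed.

Lemma smax_ei i A : A != finset.set0 -> smax (ei i) A = if i \in A then 1 else 0.
Proof.
move=> /set0Pn[j jA]; case: ifP => iA.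
  by apply: (smax_eq iA); rewrite /ei ?eqxx // => k _; case: (k == i); rewrite ?lexx ?ler01.
apply: (smax_eq jA); first by rewrite /ei; case: eqP => [ej|//]; rewrite -ej jA in iA.
by move=> k kA; rewrite /ei; case: eqP => [ek|//]; rewrite ek iA in kA.
Qed.

Lemma setT_n0 : (0 < d)%N -> [set: 'I_d] != finset.set0.
Proof. by move=> hd; apply/set0Pn; exists (Ordinal hd). Qed.

Lemma maxf_cst c : (0 < d)%N -> maxf (cst c) = c.
Proof. by move=> hd; rewrite /maxf smax_cst // setT_n0. Qed.

Lemma maxf_ei i : maxf (ei i) = 1.
Proof. by rewrite /maxf smax_ei ?inE //; apply/set0Pn; exists i. Qed.

Lemma natr_pred : (0 < d)%N -> (d%:R : R) = (d.-1)%:R + 1.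
Proof. by move=> hd; rewrite -{1}(prednK hd) -natr1. Qed.

Lemma model_identity (Rs : pred nat) (f : ('I_d -> R) -> R) : (0 < d)%N ->
  (forall A : {set 'I_d}, (#|A| \in Rs) && (0 < #|A|)%N -> #|A| = d.-1) ->
  inModel Rs f ->
  \sum_i (f (ei i) - maxf (ei i)) - (d.-1)%:R * (f (cst 1) - maxf (cst 1))
  = (f (cst 0) - maxf (cst 0)) - 1.
Proof.
move=> hd hP [b0 [beta Hf]].
rewrite !Hf !maxf_cst //.
under eq_bigr => i _ do rewrite maxf_ei Hf.
set b := (if _ then _ else _).
have n0 : forall A : {set 'I_d}, (#|A| \in Rs) && (0 < #|A|)%N -> A != finset.set0.
  by move=> A /andP[_]; rewrite card_gt0.
have E0 : \sum_(A : {set 'I_d} | (#|A| \in Rs) && (0 < #|A|)%N) beta A * smax (cst 0) A = 0.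
  by apply: big1 => A hA; rewrite smax_cst ?n0 // mulr0.
have E1 : \sum_(A : {set 'I_d} | (#|A| \in Rs) && (0 < #|A|)%N) beta A * smax (cst 1) A =
          \sum_(A : {set 'I_d} | (#|A| \in Rs) && (0 < #|A|)%N) beta A.
  by apply: eq_bigr => A hA; rewrite smax_cst ?n0 // mulr1.
have Ei : \sum_i (\sum_(A : {set 'I_d} | (#|A| \in Rs) && (0 < #|A|)%N) beta A * smax (ei i) A) =
          (d.-1)%:R * \sum_(A : {set 'I_d} | (#|A| \in Rs) && (0 < #|A|)%N) beta A.
  rewrite exchange_big /= mulr_sumr; apply: eq_bigr => A hA.
  under eq_bigr => i _ do rewrite smax_ei ?n0 //.
  rewrite -mulr_sumr -big_mkcond /= sumr_const -(hP A hA) mulrC.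
  by [].
rewrite E0 E1 sumrB big_split /= Ei !sumr_const card_ord.
rewrite -[b *+ d]mulr_natr (natr_pred hd).
set S := \sum_(_ | _) _.
ring.
Qed.


Lemma maxf_cube x : cube x -> 0 <= maxf x <= 1.
Proof. exact: smax_cube. Qed.

Lemma model_bounded (Rs : pred nat) (f : ('I_d -> R) -> R) : inModel Rs f ->
  has_ubound [set `|f x - maxf x| | x in @cube R d].
Proof.
move=> [b0 [beta Hf]].
set b := (if _ then _ else _) in Hf.
exists (`|b| + \sum_(A : {set 'I_d} | (#|A| \in Rs) && (0 < #|A|)%N) `|beta A| + 1).
move=> y [x cx <-].
apply: (le_trans (ler_normB _ _)); apply: lerD; last first.
  by have /andP[h1 h2] := maxf_cube x cx; rewrite ger0_norm.
rewrite Hf; apply: (le_trans (ler_normD _ _)); apply: lerD => //.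
apply: (le_trans (ler_norm_sum _ _ _)); apply: ler_sum => A _.
rewrite normrM; have /andP[h1 h2] := smax_cube x A cx.
rewrite (ger0_norm h1) -{2}[`|beta A|]mulr1; apply: ler_wpM2l => //.
Qed.

Lemma le_supErr (Rs : pred nat) (f : ('I_d -> R) -> R) x : inModel Rs f -> cube x ->
  `|f x - maxf x| <= supErr f.
Proof.
move=> hf cx; apply: (ub_le_sup (model_bounded Rs f hf)); by exists x.
Qed.

Lemma lower_gen (Rs : pred nat) (f : ('I_d -> R) -> R) : (0 < d)%N ->
  (forall A : {set 'I_d}, (#|A| \in Rs) && (0 < #|A|)%N -> #|A| = d.-1) ->
  inModel Rs f ->
  1 <= `|f (cst 0) - maxf (cst 0)| + (2 * d%:R - 1) * supErr f.
Proof.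
move=> hd hP hf.
have Id := model_identity Rs f hd hP hf.
pose T := \sum_i (f (ei i) - maxf (ei i)) - (d.-1)%:R * (f (cst 1) - maxf (cst 1)).
have H1 : (1 : R) = `|(f (cst 0) - maxf (cst 0)) - T|.
  rewrite /T Id; have -> : forall a : R, a - (a - 1) = 1 by move=> a; ring.
  by rewrite normr1.
rewrite {1}H1; apply: (le_trans (ler_normB _ _)); rewrite lerD2l /T.
apply: (le_trans (ler_normB _ _)).
have -> : 2 * d%:R - 1 = d%:R + (d.-1)%:R :> R by rewrite (natr_pred hd); ring.
rewrite mulrDl; apply: lerD.
  apply: (le_trans (ler_norm_sum _ _ _)).
  have -> : d%:R * supErr f = \sum_(i : 'I_d) supErr f by rewrite sumr_const card_ord mulr_natl.
  by apply: ler_sum => i _; apply: (le_supErr Rs) => //; apply: cube_ei.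
rewrite normrM ger0_norm ?ler0n //; apply: ler_wpM2l => //.
by apply: (le_supErr Rs) => //; apply: cube_cst; rewrite ler01 lexx.
Qed.


Lemma maxf_ub x k : x k <= maxf x.
Proof. by apply: smax_ub; rewrite inE. Qed.

Lemma sum_dm1 x : (1 < d)%N -> cube x -> exists s, 0 <= s <= maxf x /\
  \sum_(A : {set 'I_d} | #|A| == d.-1) smax x A = (d.-1)%:R * maxf x + s.
Proof.
move=> hd cx.
have hd0 : (0 < d)%N by apply: ltn_trans hd.
have [i0 _ Mi] := smax_mem x [set: 'I_d] (setT_n0 hd0).
pose A0 := [set~ i0].
have cA0 : #|A0| = d.-1 by rewrite cardsC1 card_ord.
have nA0 : A0 != finset.set0 by rewrite -card_gt0 cA0 -ltnS prednK.
exists (smax x A0); split.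
  have [j _ ->] := smax_mem x A0 nA0.
  by rewrite maxf_ub andbT; have /andP[] := cx j.
pose S := [set A : {set 'I_d} | #|A| == d.-1].
have -> : \sum_(A : {set 'I_d} | #|A| == d.-1) smax x A = \sum_(A in S) smax x A.
  by apply: eq_bigl => A; rewrite inE.
have A0S : A0 \in S by rewrite inE cA0.
rewrite (big_setD1 A0 A0S) /= addrC; congr (_ + _).
have -> : \sum_(A in S :\ A0) smax x A = \sum_(A in S :\ A0) maxf x.
  apply: eq_bigr => A; rewrite !inE => /andP[nAA0 /eqP cA].
  have i0A : i0 \in A.
    apply/negPn/negP => ni0.
    have sub : A \subset A0.
      by apply/fintype.subsetP => k kA; rewrite !inE; apply/eqP => e; rewrite -e kA in ni0.
    by move: nAA0; rewrite eqEcard sub cA cA0 leqnn.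
  by apply: (smax_eq i0A) => // k _; apply: maxf_ub.
rewrite sumr_const mulr_natl; congr (_ *+ _).
have := cardsD1 A0 S; rewrite A0S /= add1n /S card_draws card_ord.
by rewrite -{1}(prednK hd0) binSn => -[].
Qed.


Definition mk (Rs : pred nat) (b0 : R) (beta : {set 'I_d} -> R) (x : 'I_d -> R) : R :=
  (if 0%N \in Rs then b0 else 0) +
  \sum_(A : {set 'I_d} | (#|A| \in Rs) && (0 < #|A|)%N) beta A * smax x A.

Lemma mk_model Rs b0 beta : inModel Rs (mk Rs b0 beta).
Proof. by exists b0, beta. Qed.

Lemma model_at0 (Rs : pred nat) (f : ('I_d -> R) -> R) :
  inModel Rs f -> 0%N \notin Rs -> f (cst 0) = 0.
Proof.
move=> [b0 [beta Hf]] n0; rewrite Hf (negbTE n0) add0r.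
apply: big1 => A /andP[_ hA]; rewrite smax_cst ?mulr0 //.
by rewrite -card_gt0.
Qed.

Lemma supErr_ge0 (Rs : pred nat) (f : ('I_d -> R) -> R) : (0 < d)%N ->
  inModel Rs f -> 0 <= supErr f.
Proof.
move=> hd hf; apply: le_trans (le_supErr Rs f (cst 0) hf _) => //.
by apply: cube_cst; rewrite lexx ler01.
Qed.

Lemma supErr_le (f : ('I_d -> R) -> R) c :
  (forall x, cube x -> `|f x - maxf x| <= c) -> supErr f <= c.
Proof.
move=> h; apply: ge_sup.
  exists `|f (cst 0) - maxf (cst 0)|, (cst 0) => //.
  by apply: cube_cst; rewrite lexx ler01.
by move=> y [x cx <-]; apply: h.
Qed.

Lemma err_eq (Rs : pred nat) c (f0 : ('I_d -> R) -> R) :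
  (forall f : ('I_d -> R) -> R, inModel Rs f -> c <= supErr f) -> inModel Rs f0 -> supErr f0 = c ->
  err R d Rs = c.
Proof.
move=> lb hf0 e0.
have hlb : lbound [set @supErr R d f | f in @inModel R d Rs] c.
  by move=> y [f hf <-]; apply: lb.
apply/le_anti/andP; split.
  rewrite -[leRHS]e0; apply: (ge_inf (ex_intro _ c hlb)); by exists f0.
by apply: lb_le_inf => //; exists (supErr f0), f0.
Qed.

Lemma err_le (Rs : pred nat) c (f0 : ('I_d -> R) -> R) : (0 < d)%N ->
  inModel Rs f0 -> supErr f0 <= c -> err R d Rs <= c.
Proof.
move=> hd hf0 e0.
have hlb : lbound [set @supErr R d f | f in @inModel R d Rs] 0.
  by move=> y [f hf <-]; apply: (supErr_ge0 Rs).
apply: le_trans e0; apply: (ge_inf (ex_intro _ 0 hlb)); by exists f0.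
Qed.


Lemma mk_dm1 (Rs : pred nat) b0 beta x : (1 < d)%N -> cube x ->
  (forall A : {set 'I_d}, (#|A| \in Rs) && (0 < #|A|)%N = (#|A| == d.-1)) ->
  exists s, 0 <= s <= maxf x /\
  mk Rs b0 (fun _ => beta) x = (if 0%N \in Rs then b0 else 0) + beta * ((d.-1)%:R * maxf x + s).
Proof.
move=> hd cx hRs; have [s [hs e]] := sum_dm1 x hd cx.
exists s; split => //; rewrite /mk (eq_bigl _ _ hRs) -mulr_sumr e //.
Qed.

Lemma hP_of (Rs : pred nat) :
  (forall A : {set 'I_d}, (#|A| \in Rs) && (0 < #|A|)%N = (#|A| == d.-1)) ->
  forall A : {set 'I_d}, (#|A| \in Rs) && (0 < #|A|)%N -> #|A| = d.-1.
Proof. by move=> h A; rewrite h => /eqP. Qed.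

Lemma part1 : (1 < d)%N ->
  err R d (pred1 d.-1) = 1 / (2 * d%:R - 1)
    /\ (exists f : ('I_d -> R) -> R, inModel (pred1 d.-1) f /\ supErr f = 1 / (2 * d%:R - 1)).
Proof.
move=> hd; have hd0 : (0 < d)%N by apply: ltn_trans hd.
have hRs : forall A : {set 'I_d}, (#|A| \in pred1 d.-1) && (0 < #|A|)%N = (#|A| == d.-1).
  move=> A; rewrite inE; case: eqP => //= ->; by rewrite -ltnS prednK.
have n0 : 0%N \notin pred1 d.-1 by rewrite inE eq_sym -lt0n -ltnS prednK.
have kpos : 0 < 2 * d%:R - 1 :> R.
  have : (2 : R) <= d%:R by rewrite ler_nat.
  lra.
have lb : forall f : ('I_d -> R) -> R, inModel (pred1 d.-1) f -> 1 / (2 * d%:R - 1) <= supErr f.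
  move=> f hf; have := lower_gen (pred1 d.-1) f hd0 (hP_of _ hRs) hf.
  rewrite (model_at0 _ f hf n0) maxf_cst // subrr normr0 add0r.
  by rewrite ler_pdivrMr // mulrC.
pose f1 := mk (pred1 d.-1) 0 (fun _ => 2 / (2 * d%:R - 1)).
have hf1 : inModel (pred1 d.-1) f1 by apply: mk_model.
have e1 : supErr f1 = 1 / (2 * d%:R - 1).
  apply/le_anti/andP; split; last exact: lb.
  apply: supErr_le => x cx; rewrite /f1.
  have [s [/andP[s0 sM] ->]] := mk_dm1 (pred1 d.-1) 0 (2 / (2 * d%:R - 1)) x hd cx hRs.
  rewrite (negbTE n0) add0r.
  have /andP[M0 M1] := maxf_cube x cx.
  have -> : 2 / (2 * d%:R - 1) * ((d.-1)%:R * maxf x + s) - maxf x =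
            (2 * s - maxf x) / (2 * d%:R - 1).
    rewrite (natr_pred hd0) in kpos *; field; lra.
  rewrite normrM normfV (ger0_norm (ltW kpos)); apply: ler_wpM2r; first by rewrite invr_ge0 ltW.
  rewrite ler_norml; apply/andP; split; lra.
split; first exact: (err_eq _ _ f1 lb hf1 e1).
by exists f1.
Qed.


Lemma part2 : (1 < d)%N ->
  err R d [pred r | (r == 0%N) || (r == d.-1)] = 1 / (2 * d%:R)
    /\ (exists f : ('I_d -> R) -> R, inModel [pred r | (r == 0%N) || (r == d.-1)] f
         /\ supErr f = 1 / (2 * d%:R)).
Proof.
move=> hd; have hd0 : (0 < d)%N by apply: ltn_trans hd.
set Rs := [pred r | (r == 0%N) || (r == d.-1)].
have hRs : forall A : {set 'I_d}, (#|A| \in Rs) && (0 < #|A|)%N = (#|A| == d.-1).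
  move=> A; rewrite inE /=; case: (eqVneq #|A| 0%N) => [->|ne] /=.
    have : (0 < d.-1)%N by rewrite -ltnS prednK.
    by case: (d.-1).
  by rewrite lt0n ne andbT.
have y0 : 0%N \in Rs by rewrite !inE /= ?eqxx.
have kpos : 0 < 2 * d%:R :> R.
  have : (2 : R) <= d%:R by rewrite ler_nat.
  lra.
have lb : forall f : ('I_d -> R) -> R, inModel Rs f -> 1 / (2 * d%:R) <= supErr f.
  move=> f hf; have := lower_gen Rs f hd0 (hP_of _ hRs) hf.
  have h1 := le_supErr Rs f (cst 0) hf (cube_cst 0 le01).
  move=> h2.
  rewrite ler_pdivrMr //; apply: le_trans h2 _.
  rewrite (natr_pred hd0) in h1 *; lra.
pose f1 := mk Rs (1 / (2 * d%:R)) (fun _ => 1 / d%:R).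
have hf1 : inModel Rs f1 by apply: mk_model.
have e1 : supErr f1 = 1 / (2 * d%:R).
  apply/le_anti/andP; split; last exact: lb.
  apply: supErr_le => x cx; rewrite /f1.
  have [s [/andP[s0 sM] ->]] := mk_dm1 Rs (1 / (2 * d%:R)) (1 / d%:R) x hd cx hRs.
  rewrite y0.
  have /andP[M0 M1] := maxf_cube x cx.
  have -> : 1 / (2 * d%:R) + 1 / d%:R * ((d.-1)%:R * maxf x + s) - maxf x =
            (1 + 2 * s - 2 * maxf x) / (2 * d%:R).
    rewrite (natr_pred hd0) in kpos *; field; lra.
  rewrite normrM normfV (ger0_norm (ltW kpos)); apply: ler_wpM2r; first by rewrite invr_ge0 ltW.
  rewrite ler_norml; apply/andP; split; lra.
split; first exact: (err_eq _ _ f1 lb hf1 e1).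
by exists f1.
Qed.


Definition FF (I : {set 'I_d}) (x : 'I_d -> R) : R :=
  \sum_(A : {set 'I_d} | (A \subset I) && (A != finset.set0)) (-2) ^+ #|A| * smax x A.

Lemma smaxU1 x (B : {set 'I_d}) i0 : B != finset.set0 ->
  (forall j, j \in B -> x i0 <= x j) -> smax x (i0 |: B) = smax x B.
Proof.
move=> nB hm; have [k kB e] := smax_mem x B nB.
rewrite e; apply: (smax_eq (j:=k)) => //; first by rewrite in_setU1 kB orbT.
move=> j; rewrite in_setU1 => /orP[/eqP->|jB]; first exact: hm.
by rewrite -e; apply: smax_ub.
Qed.

Lemma FF_step (I : {set 'I_d}) x i0 : i0 \in I -> (forall j, j \in I -> x i0 <= x j) ->
  FF I x = - FF (I :\ i0) x - 2 * x i0.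
Proof.
move=> i0I hm; rewrite /FF (bigID (fun A => i0 \in A)) /=.
set F' := \sum_(A : {set 'I_d} | (A \subset I :\ i0) && (A != finset.set0)) _.
have -> : \sum_(A : {set 'I_d} | ((A \subset I) && (A != finset.set0)) && (i0 \notin A))
            (-2) ^+ #|A| * smax x A = F'.
  apply: eq_bigl => A; rewrite subsetD1; by case: (A \subset I); case: (A != _); case: (i0 \in A).
rewrite (reindex_onto (fun B => i0 |: B) (fun A => A :\ i0)) /=; last first.
  by move=> A /andP[_ iA]; rewrite finset.setD1K.
have -> : \sum_(B : {set 'I_d} | ((i0 |: B \subset I) && (i0 |: B != finset.set0)) &&
                 (i0 \in i0 |: B) && ((i0 |: B) :\ i0 == B))
            (-2) ^+ #|i0 |: B| * smax x (i0 |: B) =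
          \sum_(B : {set 'I_d} | B \subset I :\ i0) (-2) * ((-2) ^+ #|B| * smax x (i0 |: B)).
  apply: eq_big => B.
    rewrite subsetD1 finset.subUset finset.sub1set i0I setU11 /=.
    have -> : (i0 |: B != finset.set0) by apply/set0Pn; exists i0; rewrite setU11.
    have -> : ((i0 |: B) :\ i0 == B) = (i0 \notin B).
      apply/eqP/idP => [<-|nB]; first by rewrite !inE eqxx.
      apply/setP => k; rewrite !inE; case: eqP => [->|//]; by rewrite (negbTE nB).
    by rewrite !andbT.
  move=> /andP[_ /eqP e].
  have nB : i0 \notin B by rewrite -e !inE eqxx.
  by rewrite cardsU1 nB exprS mulrA.
rewrite (bigD1 finset.set0) /=; last by rewrite finset.sub0set.
rewrite finset.setU0 cards0 expr0 mul1r.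
have -> : smax x [set i0] = x i0 by apply: (smax_eq (j:=i0)); [rewrite inE | by [] | move=> k; rewrite inE => /eqP->].
have -> : \sum_(B : {set 'I_d} | (B \subset I :\ i0) && (B != finset.set0))
            (-2) * ((-2) ^+ #|B| * smax x (i0 |: B)) = (-2) * F'.
  rewrite mulr_sumr; apply: eq_bigr => B /andP[sB nB]; rewrite smaxU1 //.
  move=> j jB; apply: hm; move/fintype.subsetP: sB => /(_ j jB); rewrite inE => /andP[].
  by [].
rewrite /F'; ring.
Qed.


Lemma FF_bound n : forall (I : {set 'I_d}) x lo hi, #|I| = n -> lo <= hi ->
  (forall i, i \in I -> lo <= x i <= hi) ->
  if odd n then 2 * lo <= (-1) ^+ n * FF I x <= 2 * hi
  else 0 <= (-1) ^+ n * FF I x <= 2 * (hi - lo).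
Proof.
elim: n => [|n IH] I x lo hi cI lohi hb /=.
  rewrite (cards0_eq cI) /FF big_pred0; last first.
    by move=> A; rewrite finset.subset0 andbN.
  rewrite mulr0 lexx /=; lra.
have : (0 < #|I|)%N by rewrite cI.
rewrite card_gt0 => /set0Pn[i iI].
case: (arg_minP x iI) => i1 i1I0 hmin.
have i1I : i1 \in I := i1I0.
have cI' : #|I :\ i1| = n.
  by move: cI; rewrite (cardsD1 i1) i1I add1n => -[].
have /andP[lo1 hi1] := hb i1 i1I.
have hb' : forall j, j \in I :\ i1 -> x i1 <= x j <= hi.
  move=> j; rewrite inE => /andP[_ jI]; rewrite hmin //=.
  by have /andP[] := hb j jI.
have := IH (I :\ i1) x (x i1) hi cI' hi1 hb'.
rewrite (FF_step I x i1 i1I hmin) exprS -signr_odd.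
set F' := FF (I :\ i1) x.
case: (odd n) => /= /andP[h1 h2]; apply/andP; split; rewrite ?expr1 ?expr0 in h1 h2 *; lra.
Qed.


Lemma G_bound x : cube x -> 0 <= (-1) ^+ d * FF [set: 'I_d] x <= 2.
Proof.
move=> cx.
have := FF_bound d [set: 'I_d] x 0 1 (etrans (cardsT _) (card_ord d)) ler01 (fun i _ => cx i).
by case: (odd d) => /andP[h1 h2]; apply/andP; split; lra.
Qed.

Definition beta3 (A : {set 'I_d}) : R := - ((-1) ^+ d * (-2) ^+ #|A|) / 2 ^+ d.

Lemma mk3_eq x : (0 < d)%N ->
  mk [pred r | (r < d)%N] (1 / 2 ^+ d) beta3 x - maxf x =
  (1 - (-1) ^+ d * FF [set: 'I_d] x) / 2 ^+ d.
Proof.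
move=> hd.
set T := \sum_(A : {set 'I_d} | (#|A| \in [pred r | (r < d)%N]) && (0 < #|A|)%N)
           (-2) ^+ #|A| * smax x A.
have eF : FF [set: 'I_d] x = (-2) ^+ d * maxf x + T.
  rewrite /FF (bigD1 [set: 'I_d]) /=; last by rewrite fintype.subxx setT_n0.
  rewrite cardsT card_ord; congr (_ + _); apply: eq_bigl => A.
  rewrite finset.subsetT card_gt0 /= inE.
  have -> : (A == [set: 'I_d]) = (d <= #|A|)%N by rewrite eqEcard finset.subsetT cardsT card_ord.
  by rewrite ltnNge andbC.
have eM : \sum_(A : {set 'I_d} | (#|A| \in [pred r | (r < d)%N]) && (0 < #|A|)%N)
           beta3 A * smax x A = - ((-1) ^+ d / 2 ^+ d) * T.
  rewrite /T mulr_sumr; apply: eq_bigr => A _; rewrite /beta3; ring.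
rewrite /mk inE hd eM eF.
have c0 : (2 : R) ^+ d != 0 by rewrite expf_neq0 // pnatr_eq0.
have h : (-1 : R) ^+ d * (-2) ^+ d = 2 ^+ d by rewrite -exprMn mulN1r opprK.
have -> : (1 - (-1) ^+ d * ((-2) ^+ d * maxf x + T)) / 2 ^+ d =
   1 / 2 ^+ d - ((-1) ^+ d * (-2) ^+ d) * (2 ^+ d)^-1 * maxf x - (-1) ^+ d / 2 ^+ d * T by ring.
rewrite h mulfV //; ring.
Qed.

Lemma part3 : (0 < d)%N ->
  err R d [pred r | (r < d)%N] <= 1 / 2 ^+ d
    /\ (exists f : ('I_d -> R) -> R, inModel [pred r | (r < d)%N] f /\ supErr f <= 1 / 2 ^+ d).
Proof.
move=> hd.
pose f3 := mk [pred r | (r < d)%N] (1 / 2 ^+ d) beta3.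
have hf3 : inModel [pred r | (r < d)%N] f3 by apply: mk_model.
have c0 : (0 : R) < 2 ^+ d by rewrite exprn_gt0.
have e3 : supErr f3 <= 1 / 2 ^+ d.
  apply: supErr_le => x cx; rewrite /f3 mk3_eq //.
  have /andP[g0 g2] := G_bound x cx.
  rewrite normrM normfV (ger0_norm (ltW c0)); apply: ler_wpM2r; first by rewrite invr_ge0 ltW.
  rewrite ler_norml; apply/andP; split; lra.
split; first exact: (err_le _ _ f3 hd hf3 e3).
by exists f3.
Qed.

End Aux.

(* err is defined as an infimum; the paper's "min" (attainment) is stated
   explicitly by the existential conjuncts. *)
Theorem theorem2 (R : realType) (d : nat) (hd : (2 <= d)%N) :
  let R1 : pred nat := pred1 d.-1 in
  let R2 : pred nat := [pred r | (r == 0%N) || (r == d.-1)] in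
  let R3 : pred nat := [pred r | (r < d)%N] in
  [/\ err R d R1 = 1 / (2 * d%:R - 1)
    /\ (exists f : ('I_d -> R) -> R, inModel R1 f /\ supErr f = 1 / (2 * d%:R - 1)),
      err R d R2 = 1 / (2 * d%:R)
    /\ (exists f : ('I_d -> R) -> R, inModel R2 f /\ supErr f = 1 / (2 * d%:R))
    & err R d R3 <= 1 / 2 ^+ d
    /\ (exists f : ('I_d -> R) -> R, inModel R3 f /\ supErr f <= 1 / 2 ^+ d)].
Proof.
move=> R1 R2 R3; split.
- exact: (part1 R d hd).
- exact: (part2 R d hd).
- by apply: (part3 R d); apply: ltn_trans hd.
Qed.
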